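(* Let $A$ be a finite abelian group with at least $3$ elements and let $S_1,\ldots,S_k$ be a distinct difference system in $A$. Call a subset of $A$ a basis if it has $3$ elements and is not a translate of a subset of any $S_i$. This yields a simple rank $3$ $A$-invariant matroid structure on $A$.
   Context: Subsets $S_1,\ldots,S_k$ of an abelian group $A$ form a distinct difference system if: (i) for any $i,j$ and any $x,y \in S_i$, $z,w \in S_j$ with $x \neq y$ and $z \neq w$, the equation $x-y=z-w$ implies $x=z$ and $y=w$; (ii) each $S_i$ contains $0$ and at least one other element; (iii) $S_i \cap S_j = \{0\}$ for $i \neq j$. A translate of $T$ is a set $\{t+a : t\in T\}$, $a \in A$. $A$ acts on itself by translation; a matroid on $A$ is $A$-invariant if translates of bases are bases. A matroid is simple if every circuit has at least three elements. *)

(* Defs.v *)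
From mathcomp Require Import all_boot all_order all_algebra.
Set Implicit Arguments. Unset Strict Implicit. Unset Printing Implicit Defensive.
Import GRing.Theory.
Local Open Scope ring_scope.

Definition distinct_difference_system (A : finZmodType) (k : nat)
  (S : 'I_k -> {set A}) : Prop :=
  [/\ (forall i j (x y z w : A), x \in S i -> y \in S i -> z \in S j -> w \in S j ->
        x != y -> z != w -> x - y = z - w -> x = z /\ y = w),
      (forall i, 0 \in S i /\ exists2 x, x \in S i & x != 0)
    & (forall i j, i != j -> S i :&: S j = [set 0])].

Definition translate (A : finZmodType) (T : {set A}) (a : A) : {set A} :=
  [set t + a | t in T].

(* Matroids on a finite ground set (the whole type), given by bases. *)
Section Matroid.
Variable T : finType.
Variable B : {set {set T}}.

Definition matroid_bases : Prop :=
  B != set0 /\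
  forall B1 B2, B1 \in B -> B2 \in B -> forall x, x \in B1 :\: B2 ->
    exists2 y, y \in B2 :\: B1 & (B1 :\ x) :|: [set y] \in B.

Definition has_rank (r : nat) : Prop := forall X, X \in B -> #|X| = r.

Definition independent (X : {set T}) : Prop := exists2 Y, Y \in B & X \subset Y.

Definition circuit (C : {set T}) : Prop :=
  ~ independent C /\ forall D : {set T}, D \proper C -> independent D.

Definition simple_matroid : Prop := forall C, circuit C -> (3 <= #|C|)%N.
End Matroid.

Definition invariant_bases (A : finZmodType) (B : {set {set A}}) : Prop :=
  forall X a, X \in B -> translate X a \in B.

Definition dds_bases (A : finZmodType) (k : nat) (S : 'I_k -> {set A}) : {set {set A}} :=
  [set X : {set A} | (#|X| == 3)%N &&
     ~~ [exists i : 'I_k, exists Tr : {set A}, exists a : A,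
           (Tr \subset S i) && (X == translate Tr a)]].

(* Main.v *)
Require Import Defs.
From mathcomp Require Import all_boot all_order all_algebra zify.
Set Implicit Arguments. Unset Strict Implicit. Unset Printing Implicit Defensive.
Import GRing.Theory.
Local Open Scope ring_scope.

Lemma mem_translate (A : finZmodType) (T : {set A}) a y :
  (y \in translate T a) = (y - a \in T).
Proof.
apply/imsetP/idP => [[t Ht ->]|H]; first by rewrite addrK.
by exists (y - a); rewrite ?subrK.
Qed.

Section DDS.
Variables (A : finZmodType) (k : nat) (S : 'I_k -> {set A}).
Hypothesis hA : (3 <= #|A|)%N.
Hypothesis hS : distinct_difference_system S.

Definition coll (X : {set A}) := [exists i, exists a, X \subset translate (S i) a].

Lemma inB X : (X \in dds_bases S) = (#|X| == 3)%N && ~~ coll X.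
Proof.
rewrite inE; congr (_ && ~~ _); apply/idP/idP.
- case/existsP=> i /existsP [Tr /existsP [a /andP [sub /eqP ->]]].
  by apply/existsP; exists i; apply/existsP; exists a; apply: imsetS.
- case/existsP=> i /existsP [a sub].
  apply/existsP; exists i; apply/existsP; exists (translate X (-a)).
  apply/existsP; exists a; apply/andP; split.
  + apply/subsetP => t; rewrite mem_translate opprK => H.
    by have := subsetP sub _ H; rewrite mem_translate addrK.
  + by apply/eqP/setP => y; rewrite !mem_translate opprK subrK.
Qed.

Lemma line_uniq i j a b u v w : u != v ->
  u \in translate (S i) a -> v \in translate (S i) a ->
  u \in translate (S j) b -> v \in translate (S j) b -> w \in translate (S j) b ->
  w \in translate (S i) a.
Proof.
case: hS => H1 _ H3.
rewrite !mem_translate => nuv ua va ub vb wb.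
have nab : u - a != v - a by apply: contra nuv => /eqP /addIr ->.
have ncd : u - b != v - b by apply: contra nuv => /eqP /addIr ->.
have ed : forall c, u - c - (v - c) = u - v by move=> c; rewrite opprB addrA subrK.
have [e1 e2] := H1 i j _ _ _ _ ua va ub vb nab ncd (etrans (ed a) (esym (ed b))).
have eab : a = b by move/addrI: e1 => /oppr_inj.
subst b.
case: (eqVneq i j) => [eij|nij]; first by rewrite eij.
have := H3 _ _ nij; move/setP => E.
have h1 : v - a = 0 by apply/set1P; rewrite -E inE va vb.
have h2 : u - a = 0 by apply/set1P; rewrite -E inE ua ub.
by move: nuv; rewrite -(subrK a u) -(subrK a v) h1 h2 eqxx.
Qed.

Lemma not_full i a : exists z, z \notin translate (S i) a.
Proof.
case: hS => H1 H2 _.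
case: (pickP [pred z | z \notin translate (S i) a]) => [z Hz|H]; first by exists z.
have full : forall y, y \in S i.
  move=> y; have := H (y + a); rewrite /= mem_translate addrK.
  by case: (y \in S i).
have [_ [x _ nx0]] := H2 i.
have e : x + x - x = x - 0 by rewrite addrK subr0.
have nxx : x + x != x by apply: contra nx0 => /eqP h; apply/eqP; apply: (addrI x); rewrite h addr0.
have [h _] := H1 i i (x + x) x x 0 (full _) (full _) (full _) (full _) nxx nx0 e.
by move: nxx; rewrite h eqxx.
Qed.

Lemma other (x : A) : exists y, y != x.
Proof.
have : (0 < #|predC1 x|)%N by rewrite cardC1; case: #|A| hA => [|[|]].
by case/card_gt0P => y; rewrite inE; exists y.
Qed.

Lemma other2 (x y : A) : exists z, (z != x) && (z != y).
Proof.
have : (0 < #|~: [set x; y]|)%N.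
  have := cardsC [set x; y]; rewrite cards2 => E.
  move: hA; rewrite -E; case: (x != y) => /=; lia.
case/card_gt0P => z; rewrite !inE negb_or => H; by exists z.
Qed.

Lemma card3 (x y z : A) : x != y -> y != z -> x != z -> #|[set x; y; z]| = 3%N.
Proof.
move=> nxy nyz nxz.
rewrite -setUA !cardsU1 cards1 !inE negb_or nxy nxz nyz //.
Qed.

Lemma ext2 x y : x != y -> exists z, [&& z != x, z != y & [set x; y; z] \in dds_bases S].
Proof.
move=> nxy.
case: (boolP (coll [set x; y])).
- case/existsP=> i /existsP [a sub].
  have xL : x \in translate (S i) a by apply: (subsetP sub); rewrite !inE eqxx.
  have yL : y \in translate (S i) a by apply: (subsetP sub); rewrite !inE eqxx orbT.
  have [z zL] := not_full i a.
  have nzx : z != x by apply: contra zL => /eqP ->.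
  have nzy : z != y by apply: contra zL => /eqP ->.
  exists z; rewrite nzx nzy inB (card3 nxy) 1?eq_sym //=.
  apply/negP => /existsP [j /existsP [b sub2]].
  have m : forall t, t \in [set x; y; z] -> t \in translate (S j) b by apply/subsetP.
  move: zL; rewrite (line_uniq nxy xL yL (m _ _) (m _ _) (m _ _)) // !inE eqxx ?orbT //.
- move=> nc; have [z /andP [nzx nzy]] := other2 x y.
  exists z; rewrite nzx nzy inB (card3 nxy) 1?eq_sym //=.
  apply: contra nc => /existsP [i /existsP [a sub]].
  apply/existsP; exists i; apply/existsP; exists a.
  apply: subset_trans sub; apply/subsetP => t; rewrite !inE => ->; by [].
Qed.

End DDS.

Theorem proposition3p24 (A : finZmodType) (k : nat) (S : 'I_k -> {set A}) :
  (3 <= #|A|)%N ->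
  distinct_difference_system S ->
  let B := dds_bases S in
  matroid_bases B /\ has_rank B 3 /\ simple_matroid B /\ invariant_bases B.
Proof.
move=> hA hS B.
have card_tr : forall (X : {set A}) a, #|translate X a| = #|X|.
  by move=> X a; apply: card_imset; apply: addIr.
have indep2 : forall x y : A, x != y -> independent B [set x; y].
  move=> x y nxy; have [z /and3P [_ _ Hz]] := ext2 hA hS nxy.
  exists [set x; y; z] => //; apply/subsetP => t; rewrite !inE => /orP [] ->; by rewrite ?orbT.
split; [|split; [|split]].
- split.
  + have [x _] := other hA 0.
    have [y nyx] := other hA x.
    have [z /and3P [_ _ Hz]] := ext2 hA hS (nyx : y != x).
    by apply/set0Pn; exists [set y; x; z].
  + move=> B1 B2 hB1 hB2 x hx.
    have hB1' := hB1; have hB2' := hB2.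
    rewrite /B inB in hB1'; rewrite inB in hB2'.
    case/andP: hB1' => /eqP c1 nc1; case/andP: hB2' => /eqP c2 nc2.
    case/setDP: hx => xB1 xnB2.
    have : #|B1 :\ x| = 2%N by move: (cardsD1 x B1); rewrite xB1 c1 => -[].
    move/eqP; case/cards2P => p [q [npq Epq]].
    case: (pickP [pred y | (y \in B2 :\: B1) && ((B1 :\ x) :|: [set y] \in B)]) => [y Hy|none].
      by case/andP: Hy => h1 h2; exists y.
    exfalso.
    have : (0 < #|B2 :\: B1|)%N.
      rewrite cardsD setIC c2 -c1 -cardsD; apply/card_gt0P; exists x; by rewrite inE xB1 xnB2.
    case/card_gt0P => y0 y0in.
    have collof : forall y, y \in B2 :\: B1 -> coll S [set p; q; y].
      move=> y yin; have := none y; rewrite /= yin /= /B inB Epq.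
      case/setDP: yin => _ ynB1.
      have ynp : y \notin [set p; q] by rewrite -Epq !inE negb_and ynB1 orbT.
      have nyp : p != y by apply: contra ynp => /eqP <-; rewrite !inE eqxx.
      have nyq : q != y by apply: contra ynp => /eqP <-; rewrite !inE eqxx orbT.
      by rewrite (card3 npq nyq nyp) /= => /negbFE.
    case/existsP: (collof y0 y0in) => i /existsP [a sub].
    have m : forall t, t \in [set p; q; y0] -> t \in translate (S i) a by apply/subsetP.
    have pL : p \in translate (S i) a by apply: m; rewrite !inE eqxx.
    have qL : q \in translate (S i) a by apply: m; rewrite !inE eqxx orbT.
    move/negP: nc2; apply; apply/existsP; exists i; apply/existsP; exists a.
    apply/subsetP => t tB2.
    case: (boolP (t \in B1)) => tB1.
      have : t \in B1 :\ x by rewrite !inE tB1 andbT; apply: contra xnB2 => /eqP <-.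
      by rewrite Epq !inE => /orP [] /eqP ->.
    have tin : t \in B2 :\: B1 by rewrite inE tB1 tB2.
    case/existsP: (collof t tin) => j /existsP [b sub2].
    have m2 : forall s, s \in [set p; q; t] -> s \in translate (S j) b by apply/subsetP.
    apply: (line_uniq hS npq pL qL (m2 _ _) (m2 _ _) (m2 _ _)); by rewrite !inE eqxx ?orbT.
- by move=> X; rewrite /B inB => /andP [/eqP].
- move=> C [nind _]; rewrite leqNgt; apply/negP => Cle.
  apply: nind.
  have [x _] := other hA 0.
  have [y nyx] := other hA x.
  have mono : forall D E : {set A}, D \subset E -> independent B E -> independent B D.
    by move=> D E DE [Y HY EY]; exists Y => //; apply: subset_trans EY.
  move: Cle; rewrite ltnS leq_eqVlt => /orP [/cards2P [u [v [nuv ->]]]|].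
    exact: indep2.
  rewrite ltnS leq_eqVlt => /orP [/cards1P [u ->]|].
    have [v nvu] := other hA u.
    apply: (mono _ _ _ (indep2 u v _)); last by rewrite eq_sym.
    by apply/subsetP => t; rewrite !inE => ->.
  rewrite ltnS leqn0 => /eqP/cards0_eq ->.
  apply: (mono _ _ _ (indep2 y x nyx)); exact: sub0set.
- move=> X a; rewrite /B !inB card_tr => /andP [-> nc] /=.
  apply: contra nc => /existsP [i /existsP [b sub]].
  apply/existsP; exists i; apply/existsP; exists (b - a).
  apply/subsetP => y yX.
  have : y + a \in translate X a by rewrite mem_translate addrK.
  move/(subsetP sub); rewrite !mem_translate.
  by rewrite opprB addrA.
Qed.
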